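(* Every unweighted instance $(H,U,k)$ of the atomic two-stage facility location game (i.e. $w(v)=1$ for all $v\in V$; the feasibility sets $U(f)$ may be arbitrary) admits a subgame perfect equilibrium $(\mathbf{s},\sigma)$ in which the full client profile $\sigma$ is a full client equilibrium consisting of pure client profiles (i.e. $\sigma(\mathbf{s}')_{v,f}\in\{0,1\}$ for all FPPs $\mathbf{s}'$, clients $v$ and facilities $f$).
   Context: Atomic two-stage facility location game. An instance is a triple $(H,U,k)$: $H=(V,E,w)$ is a finite directed graph with vertex weights $w:V\to\mathbb{Q}_{>0}$; $F$ is a set of $k$ facility agents; $U:F\to 2^V$ assigns to each facility agent $f$ a set $U(f)\subseteq V$ of feasible locations. The vertices are simultaneously the clients and the possible locations. The instance is unweighted if $w(v)=1$ for all $v$. A facility placement profile (FPP) is a vector $\mathbf{s}=(s_f)_{f\in F}$ with $s_f\in U(f)$ (several facilities may choose the same vertex); $S$ denotes the set of all FPPs. For a client $v$ let $N(v)=\{v\}\cup\{u:(v,u)\in E\}$ and $N_{\mathbf{s}}(v)=\{f\in F: s_f\in N(v)\}$. A client profile for $\mathbf{s}$ is $\sigma(\mathbf{s})$, assigning to each client $v$ numbers $\sigma(\mathbf{s})_{v,f}\in[0,1]$ ($f\in F$) with $\sigma(\mathbf{s})_{v,f}=0$ for $f\notin N_{\mathbf{s}}(v)$ and $\sum_{f\in N_{\mathbf{s}}(v)}\sigma(\mathbf{s})_{v,f}=1$ whenever $N_{\mathbf{s}}(v)\neq\varnothing$ (a probability distribution over available facilities). A full client profile $\sigma$ specifies a client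 profile $\sigma(\mathbf{s}')$ for every $\mathbf{s}'\in S$. The load of facility $f$ is $\ell_f(\mathbf{s},\sigma)=\sum_{v\in V}\sigma(\mathbf{s})_{v,f}w(v)$. The cost of client $v$ is $L_v(\mathbf{s},\sigma)=w(v)+\sum_{f\in N_{\mathbf{s}}(v)}\sigma(\mathbf{s})_{v,f}\,\ell_{-v,f}(\mathbf{s},\sigma)$ where $\ell_{-v,f}(\mathbf{s},\sigma)=\sum_{u\neq v}\sigma(\mathbf{s})_{u,f}w(u)$. $\sigma(\mathbf{s})$ is a client equilibrium if no client $v$ can strictly decrease $L_v$ by unilaterally changing her own distribution to another feasible one; $\sigma$ is a full client equilibrium if $\sigma(\mathbf{s}')$ is a client equilibrium for every $\mathbf{s}'\in S$. A pair $(\mathbf{s},\sigma)$ is a subgame perfect equilibrium (SPE) if $\sigma$ is a full client equilibrium and there is no facility $f$ and location $s'_f\in U(f)$ with $\ell_f((s'_f,\mathbf{s}_{-f}),\sigma)>\ell_f(\mathbf{s},\sigma)$. *)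

(* Defs.v *)
From mathcomp Require Import all_boot all_order all_algebra.
Set Implicit Arguments. Unset Strict Implicit. Unset Printing Implicit Defensive.
Import Order.TTheory GRing.Theory Num.Theory.
Local Open Scope ring_scope.

Section FLG.
Variables (V F : finType).

(* directed graph H = (V, E, w): E : rel V, w : V -> rat *)

Definition Nbh (E : rel V) (v : V) : pred V := fun u => (u == v) || E v u.

Definition is_fpp (U : F -> {set V}) (s : {ffun F -> V}) : Prop :=
  forall f, s f \in U f.

Definition Ns (E : rel V) (s : {ffun F -> V}) (v : V) : {set F} :=
  [set f | Nbh E v (s f)].

Definition valid_dist (E : rel V) (s : {ffun F -> V}) (v : V) (p : F -> rat) : Prop :=
  (forall f, 0 <= p f <= 1) /\
  (forall f, f \notin Ns E s v -> p f = 0) /\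
  (Ns E s v != set0 -> \sum_(f in Ns E s v) p f = 1).

(* client profile for s: c v f = sigma(s)_{v,f} *)
Definition is_client_profile (E : rel V) (s : {ffun F -> V}) (c : V -> F -> rat) : Prop :=
  forall v, valid_dist E s v (c v).

Definition load (w : V -> rat) (c : V -> F -> rat) (f : F) : rat :=
  \sum_(v : V) c v f * w v.

Definition load_minus (w : V -> rat) (c : V -> F -> rat) (v : V) (f : F) : rat :=
  \sum_(u : V | u != v) c u f * w u.

Definition cost (E : rel V) (w : V -> rat) (s : {ffun F -> V})
    (c : V -> F -> rat) (v : V) : rat :=
  w v + \sum_(f in Ns E s v) c v f * load_minus w c v f.

Definition set_row (c : V -> F -> rat) (v : V) (p : F -> rat) : V -> F -> rat :=
  fun u => if u == v then p else c u.

Definition client_eq (E : rel V) (w : V -> rat) (s : {ffun F -> V})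
    (c : V -> F -> rat) : Prop :=
  is_client_profile E s c /\
  forall v p, valid_dist E s v p -> ~ (cost E w s (set_row c v p) v < cost E w s c v).

Definition full_client_eq (E : rel V) (w : V -> rat) (U : F -> {set V})
    (sigma : {ffun F -> V} -> V -> F -> rat) : Prop :=
  forall s, is_fpp U s -> client_eq E w s (sigma s).

Definition upd (s : {ffun F -> V}) (f : F) (x : V) : {ffun F -> V} :=
  [ffun g => if g == f then x else s g].

Definition is_SPE (E : rel V) (w : V -> rat) (U : F -> {set V})
    (s : {ffun F -> V}) (sigma : {ffun F -> V} -> V -> F -> rat) : Prop :=
  is_fpp U s /\ full_client_eq E w U sigma /\
  forall f x, x \in U f -> ~ (load w (sigma s) f < load w (sigma (upd s f x)) f).

Definition pure_full_profile (U : F -> {set V})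
    (sigma : {ffun F -> V} -> V -> F -> rat) : Prop :=
  forall s, is_fpp U s -> forall v f, sigma s v f = 0 \/ sigma s v f = 1.

End FLG.

(* Main.v *)
Require Import Defs.
From mathcomp Require Import all_boot all_order all_algebra.
From mathcomp Require Import zify.
Set Implicit Arguments. Unset Strict Implicit. Unset Printing Implicit Defensive.
Import Order.TTheory GRing.Theory Num.Theory.

Definition sees (V F : finType) (E : rel V) (s : {ffun F -> V}) (v : V) (g : F) : bool :=
  Nbh E v (s g).

Definition validA (V F : finType) (E : rel V) (s : {ffun F -> V}) (a : {ffun V -> option F}) : bool :=
  [forall v, match a v with Some g => sees E s v g | None => [forall g, ~~ sees E s v g] end].

Definition ld (V F : finType) (a : {ffun V -> option F}) (k : F) : nat :=
  \sum_(u : V) (a u == Some k).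

Definition noMove (V F : finType) (E : rel V) (s : {ffun F -> V}) (a : {ffun V -> option F}) : bool :=
  [forall v, [forall h, [forall g,
     (a v == Some h) ==> sees E s v g ==> (ld a h <= (ld a g).+1)]]].

Definition Phi (V F : finType) (a : {ffun V -> option F}) : nat :=
  \sum_(k : F) (#|F|.+2) ^ (#|V| - ld a k).

Definition mv (V F : finType) (a : {ffun V -> option F}) (v : V) (o : option F) : {ffun V -> option F} :=
  [ffun u => if u == v then o else a u].

Definition rr (V F : finType) (E : rel V) (s : {ffun F -> V}) (a : {ffun V -> option F}) : rel F :=
  fun h g => [exists v, (a v == Some h) && sees E s v g].

Lemma exists_min (T : finType) (P : pred T) (m : T -> nat) :
  (exists x, P x) -> exists x, P x /\ forall y, P y -> m x <= m y.
Proof. move=> [x0 Px0]; case: (arg_minnP m Px0) => x Px H; by exists x. Qed.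

Lemma ld_le (V F : finType) (a : {ffun V -> option F}) k : ld a k <= #|V|.
Proof.
rewrite /ld -sum1_card; apply: leq_sum => u _; exact: leq_b1.
Qed.

Lemma ld_mv (V F : finType) (a : {ffun V -> option F}) v o k :
  ld (mv a v o) k + (a v == Some k) = ld a k + (o == Some k).
Proof.
rewrite /ld (bigD1 v) //= [in RHS](bigD1 v) //= ffunE eqxx.
have -> : \sum_(i | i != v) (mv a v o i == Some k) = \sum_(i | i != v) (a i == Some k).
  by apply: eq_bigr => u /negbTE uv; rewrite ffunE uv.
lia.
Qed.

Lemma sum_two (I : finType) (G : nat -> nat) (x y : I -> nat) h g : h != g ->
  (forall k, k != h -> k != g -> x k = y k) ->
  \sum_k G (x k) + G (y h) + G (y g) = \sum_k G (y k) + G (x h) + G (x g).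
Proof.
move=> hg eq.
rewrite (bigD1 h) //= (bigD1 g) /=; last by rewrite eq_sym.
rewrite [in RHS](bigD1 h) //= [in RHS](bigD1 g) /=; last by rewrite eq_sym.
rewrite (eq_bigr (fun k => G (y k))); last by move=> k /andP[kh kg]; rewrite eq.
lia.
Qed.

Lemma Phi_shift (V F : finType) (a b : {ffun V -> option F}) h g : h != g ->
  (forall k, ld b k + (k == h) = ld a k + (k == g)) -> ld a g < ld a h ->
  Phi b <= Phi a /\ ((ld a g).+2 <= ld a h -> Phi b < Phi a).
Proof.
move=> hg eq lt.
have eh := eq h; have eg := eq g; rewrite eqxx (negbTE hg) in eh.
rewrite eq_sym (negbTE hg) eqxx in eg.
have eo : forall k, k != h -> k != g -> ld b k = ld a k.
  by move=> k /negbTE kh /negbTE kg; have := eq k; rewrite kh kg !addn0.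
have := sum_two (fun n => (#|F|.+2) ^ (#|V| - n)) hg eo.
rewrite -/(Phi b) -/(Phi a).
have la := ld_le a h.
set B := #|F|.+2; set K := #|V|.
have e1 : K - ld b h = (K - ld a h).+1 by lia.
have e2 : K - ld a g = (K - ld b g).+1 by lia.
rewrite e1 e2 !expnS.
have B2 : 2 <= B by [].
have X1 : 0 < B ^ (K - ld a h) by rewrite expn_gt0.
have XY : B ^ (K - ld a h) <= B ^ (K - ld b g) by apply: leq_pexp2l => //; lia.
move=> E0; split; first by nia.
move=> lt2.
have XY2 : B * B ^ (K - ld a h) <= B ^ (K - ld b g).
  by rewrite -expnS; apply: leq_pexp2l => //; lia.
nia.
Qed.

Lemma validA_mv (V F : finType) (E : rel V) s (a : {ffun V -> option F}) v g :
  validA E s a -> sees E s v g -> validA E s (mv a v (Some g)).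
Proof.
move=> /forallP va svg; apply/forallP => u; rewrite ffunE.
by case: (u =P v) => [->|_] //; apply: va.
Qed.

Lemma ld_mv_some (V F : finType) (a : {ffun V -> option F}) v h g :
  a v = Some h -> forall k, ld (mv a v (Some g)) k + (k == h) = ld a k + (k == g).
Proof.
move=> av k; have := ld_mv a v (Some g) k; rewrite av.
have e1 : (Some h == Some k) = (k == h) by rewrite eq_sym.
have e2 : (Some g == Some k) = (k == g) by rewrite eq_sym.
by rewrite e1 e2.
Qed.

Lemma RH (V F : finType) (E : rel V) s (a : {ffun V -> option F}) v h g :
  validA E s a -> a v = Some h -> sees E s v g -> (ld a g).+2 <= ld a h ->
  validA E s (mv a v (Some g)) /\ Phi (mv a v (Some g)) < Phi a.
Proof.
move=> va av svg lt; split; first exact: validA_mv.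
have hg : h != g by apply/eqP => e; rewrite e in lt; lia.
have [_ ] := Phi_shift hg (ld_mv_some g av) ltac:(lia).
by apply.
Qed.

Lemma validA_exists (V F : finType) (E : rel V) s : exists a : {ffun V -> option F}, validA E s a.
Proof.
exists [ffun v => [pick g | sees E s v g]]; apply/forallP => v; rewrite ffunE.
case: pickP => [g //|H]; apply/forallP => g; by rewrite H.
Qed.

Lemma min_noMove (V F : finType) (E : rel V) s (z : {ffun V -> option F}) :
  validA E s z -> (forall z2, validA E s z2 -> Phi z <= Phi z2) -> noMove E s z.
Proof.
move=> vz zmin; apply/forallP => v; apply/forallP => h; apply/forallP => g.
apply/implyP => /eqP zv; apply/implyP => sv; rewrite leqNgt; apply/negP => lt.
have [v1 ph] := RH vz zv sv lt.
by have := zmin _ v1; lia.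
Qed.

Lemma eq_exists (V F : finType) (E : rel V) s :
  exists z : {ffun V -> option F}, validA E s z && noMove E s z.
Proof.
have [z [vz zmin]] := exists_min (@Phi V F) (validA_exists E s).
by exists z; rewrite vz (min_noMove vz zmin).
Qed.

Lemma Phi_dom (V F : finType) (a b : {ffun V -> option F}) f L :
  ld a f = L -> L < ld b f -> (forall h, L < ld b h \/ ld a h <= ld b h) -> Phi b < Phi a.
Proof.
move=> af bf dom.
rewrite /Phi (bigID (fun h => L < ld b h)) [X in _ < X](bigID (fun h => L < ld b h)) /=.
set B := #|F|.+2; set K := #|V|.
have bK := ld_le b f.
have S2 : \sum_(i | ~~ (L < ld b i)) B ^ (K - ld b i) <= \sum_(i | ~~ (L < ld b i)) B ^ (K - ld a i).
  apply: leq_sum => h hL; apply: leq_pexp2l => //.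
  have := dom h; rewrite (negbTE hL) => -[//|]; lia.
have S1 : \sum_(i | L < ld b i) B ^ (K - ld b i) <= #|F| * B ^ (K - L.+1).
  apply: leq_trans (_ : \sum_(i : F) B ^ (K - L.+1) <= _).
    rewrite [X in _ <= X](bigID (fun h => L < ld b h)) /=.
    apply: leq_trans (leq_addr _ _).
    apply: leq_sum => h hL; apply: leq_pexp2l => //; lia.
  by rewrite sum_nat_const.
have S3 : B ^ (K - L) <= \sum_(i | L < ld b i) B ^ (K - ld a i).
  by rewrite (bigD1 f) //= af leq_addr.
have e : K - L = (K - L.+1).+1 by lia.
rewrite e expnS in S3.
have P0 : 0 < B ^ (K - L.+1) by rewrite expn_gt0.
have S4 : #|F| * B ^ (K - L.+1) < B * B ^ (K - L.+1) by rewrite ltn_pmul2r.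
lia.
Qed.

Lemma shift (V F : finType) (E : rel V) s (p : seq F) : forall (z : {ffun V -> option F}) h,
  validA E s z -> path (rr E s z) h p -> uniq (h :: p) -> p != [::] ->
  exists z2, validA E s z2 /\ forall k, ld z2 k + (k == h) = ld z k + (k == last h p).
Proof.
elim: p => [//|h1 p IH] z h vz /= /andP[/existsP[v /andP[/eqP zv sv]] pth] U _.
set z1 := mv z v (Some h1).
have vz1 : validA E s z1 by apply: validA_mv.
have ld1 := ld_mv_some h1 zv.
case: p IH pth U => [|h2 p] IH pth U.
  by exists z1; split.
have pth1 : path (rr E s z1) h1 (h2 :: p).
  apply: (@sub_in_path _ [pred y | y != h] (rr E s z)) => //.
    move=> x y xh _ /existsP[u /andP[zu su]]; apply/existsP; exists u.
    rewrite /z1 ffunE; case: (u =P v) => [e|_]; last by rewrite zu.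
    by move: zu; rewrite e zv => /eqP [] ex; move: xh; rewrite inE /= ex eqxx.
  move: U => /andP[hn _]; apply/allP => y yin /=; apply: contraNneq hn => <-.
  exact: yin.
move: U => /= /andP[_ U].
have [z2 [vz2 ld2]] := IH z1 h1 vz1 pth1 U isT.
exists z2; split => // k.
have := ld2 k; have := ld1 k; rewrite /z1 /=.
lia.
Qed.

Definition fppb (V F : finType) (U : F -> {set V}) (s : {ffun F -> V}) : bool :=
  [forall g, s g \in U g].

Lemma key (V F : finType) (E : rel V) (U : F -> {set V}) (s : {ffun F -> V})
  (a : {ffun V -> option F}) f x :
  fppb U s -> validA E s a ->
  (forall s2 (a2 : {ffun V -> option F}), fppb U s2 -> validA E s2 a2 -> Phi a <= Phi a2) ->
  x \in U f ->
  exists z, validA E (upd s f x) z && noMove E (upd s f x) z /\ ld z f <= ld a f.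
Proof.
move=> fs va amin xU.
set s' := upd s f x.
have fs' : fppb U s'.
  apply/forallP => g; rewrite /s' /upd ffunE; case: (g =P f) => [->//|_].
  exact: (forallP fs).
have s'E : forall g, g != f -> s' g = s g.
  by move=> g /negbTE gf; rewrite /s' /upd ffunE gf.
pose mu (z : {ffun V -> option F}) := Phi z * #|V|.+1 + ld z f.
have [z [vz zmin]] := exists_min mu (validA_exists E s').
have nm : noMove E s' z.
  apply/forallP => v; apply/forallP => h; apply/forallP => g.
  apply/implyP => /eqP zv; apply/implyP => sv; rewrite leqNgt; apply/negP => lt.
  have [v1 ph] := RH vz zv sv lt.
  have := zmin _ v1; rewrite /mu.
  have := ld_le (mv z v (Some g)) f; have := ld_le z f.
  nia.
case: (leqP (ld z f) (ld a f)) => [le|gt]; first by exists z; rewrite vz nm.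
exfalso. set L := ld a f.
set D := [set h | [exists g, connect (rr E s' z) h g && (ld z g <= L)]].
have fD : f \notin D.
  apply/negP; rewrite inE => /existsP[g /andP[cfg lg]].
  have fg : f != g by apply/eqP => e; rewrite -e in lg; lia.
  move/connectP: cfg => [p pp lastp].
  move: lastp; case: (shortenP pp) => p' pp' up' _ lastp.
  have pn : p' != [::] by apply/eqP => e; rewrite e /= in lastp; rewrite lastp eqxx in fg.
  have [z2 [vz2 ld2]] := shift vz pp' up' pn.
  rewrite -lastp in ld2.
  have [Ple _] := Phi_shift fg ld2 ltac:(lia).
  have := ld2 f; rewrite eqxx (negbTE fg) => e2.
  have := zmin _ vz2; rewrite /mu.
  nia.
have hD : forall h, h \notin D -> L < ld z h.
  move=> h; rewrite inE => /existsP nh; rewrite ltnNge; apply/negP => hl.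
  by apply: nh; exists h; rewrite connect0 hl.
pose w := [ffun v => if a v is Some h then (if h \in D then Some h else z v) else z v].
have vw : validA E s' w.
  apply/forallP => v; rewrite /w ffunE.
  case av: (a v) => [h|]; last exact: (forallP vz v).
  case: ifP => hin; last exact: (forallP vz v).
  have := forallP va v; rewrite av /sees s'E //.
  by apply: contraNneq fD => <-.
have zw : forall h, h \notin D -> ld z h <= ld w h.
  move=> h hn; apply: leq_sum => u _.
  case zu: (z u == Some h); last by []. move/eqP: zu => zu.
  rewrite /w ffunE; case au: (a u) => [k|]; last by rewrite zu eqxx.
  case: ifP => kD; last by rewrite zu eqxx.
  exfalso; move: hn; rewrite inE => /existsP; apply.
  move: kD; rewrite inE => /existsP[g /andP[ckg lg]].
  have kf : k != f.
    by apply/eqP => e; move: fD; rewrite -e inE => /existsP; apply; exists g; rewrite ckg lg.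
  exists g; rewrite lg andbT.
  apply: connect_trans ckg; apply: connect1; apply/existsP; exists u.
  rewrite zu eqxx /=.
  by have := forallP va u; rewrite au /sees s'E.
have dom : forall h, L < ld w h \/ ld a h <= ld w h.
  move=> h; case hin: (h \in D).
    right; apply: leq_sum => u _.
    case: (a u =P Some h) => [au|]; last by [].
    by rewrite /w ffunE au hin eqxx.
  left; have := hD h; have := zw h; rewrite hin; move=> A1 A2; have := A1 isT; have := A2 isT; lia.
have Lw : L < ld w f by have := zw f fD; have := hD f fD; lia.
have := Phi_dom (erefl L) Lw dom.
have := amin _ _ fs' vw.
lia.
Qed.

Local Open Scope ring_scope.

Definition toC (V F : finType) (a : {ffun V -> option F}) : V -> F -> rat :=
  fun v g => if a v == Some g then 1 else 0.

Lemma toC_load (V F : finType) (w : V -> rat) (a : {ffun V -> option F}) k :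
  (forall v, w v = 1) -> load w (toC a) k = (ld a k)%:R.
Proof.
move=> hw; rewrite /load /ld natr_sum; apply: eq_bigr => v _.
by rewrite hw mulr1 /toC; case: (a v == Some k).
Qed.

Lemma toC_lm (V F : finType) (w : V -> rat) (a : {ffun V -> option F}) v k :
  (forall v, w v = 1) -> load_minus w (toC a) v k = (ld a k)%:R - (a v == Some k)%:R.
Proof.
move=> hw; rewrite /load_minus /ld [in RHS](bigD1 v) //= natrD natr_sum addrAC subrr add0r.
apply: eq_bigr => u _; by rewrite hw mulr1 /toC; case: (a u == Some k).
Qed.

Lemma client_eq_toC (V F : finType) (E : rel V) (w : V -> rat) s (a : {ffun V -> option F}) :
  (forall v, w v = 1) -> validA E s a -> noMove E s a -> client_eq E w s (toC a).
Proof.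
move=> hw va nm; split.
  move=> v; split; [|split].
  - by move=> g; rewrite /toC; case: (_ == _); rewrite ?lexx ?ler01.
  - move=> g gN; rewrite /toC; case: eqP => // av; exfalso.
    have := forallP va v; rewrite av => sg; move/negP: gN; apply.
    by rewrite inE.
  - move=> Nn; case av: (a v) => [h|].
      rewrite (bigD1 h) /=; last by have := forallP va v; rewrite av inE.
      rewrite /toC av eqxx big1 ?addr0 // => g /andP[_ gh].
      by case: eqP => // -[] e; rewrite e eqxx in gh.
    exfalso; move/set0Pn: Nn => [g]; rewrite inE.
    have := forallP va v; rewrite av => /forallP /(_ g) /negP; exact.
move=> v p [p01 [p0 psum]].
rewrite /cost.
have lmE : forall g, load_minus w (set_row (toC a) v p) v g = load_minus w (toC a) v g.
  move=> g; apply: eq_bigr => u uv; by rewrite /set_row (negbTE uv).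
under eq_bigr => g _ do rewrite lmE.
rewrite {1}/set_row eqxx.
case av: (a v) => [h|].
  have hN : h \in Ns E s v by have := forallP va v; rewrite av inE.
  have cE : \sum_(f in Ns E s v) toC a v f * load_minus w (toC a) v f = load_minus w (toC a) v h.
    rewrite (bigD1 h) //= big1 ?addr0.
      by rewrite /toC av eqxx mul1r.
    move=> g /andP[_ gh]; rewrite /toC av; case: eqP => [[] e|_].
      by rewrite e eqxx in gh.
    by rewrite mul0r.
  rewrite cE.
  apply/negP; rewrite -leNgt lerD2l.
  have lb : forall g, g \in Ns E s v -> load_minus w (toC a) v h <= load_minus w (toC a) v g.
    move=> g gN; rewrite !toC_lm // av eqxx.
    case: (g =P h) => [->|gh]; first by rewrite eqxx.
    have -> : (Some h == Some g) = false by apply/eqP => -[] e; apply: gh.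
    rewrite subr0 lerBlDr -natrD ler_nat addn1.
    have := forallP nm v => /forallP /(_ h) /forallP /(_ g).
    by rewrite av eqxx /= inE in gN *; rewrite /sees gN.
  have nz : Ns E s v != set0 by apply/set0Pn; exists h.
  apply: le_trans (_ : \sum_(g in Ns E s v) p g * load_minus w (toC a) v h <= _).
    by rewrite -mulr_suml psum // mul1r.
  apply: ler_sum => g gN; apply: ler_wpM2l; first by have /andP[] := p01 g.
  exact: lb.
have -> : Ns E s v = set0.
  apply/setP => g; rewrite inE in_set0.
  by have := forallP va v; rewrite av => /forallP /(_ g) /negbTE.
by rewrite !big_set0 ltxx.
Qed.

Definition good (V F : finType) (E : rel V) (s : {ffun F -> V}) (a : {ffun V -> option F})
  (s' : {ffun F -> V}) (z : {ffun V -> option F}) : bool :=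
  [&& validA E s' z, noMove E s' z &
   (if s' == s then z == a else
    if [pick g | s' g != s g] is Some g then
      [forall z2, (validA E s' z2 && noMove E s' z2) ==> (ld z g <= ld z2 g)%N]
    else true)].

Theorem mainTheorem1 (V F : finType) (E : rel V) (w : V -> rat) (U : F -> {set V}) :
  (forall v, w v = 1) ->
  (forall f, U f != set0) ->
  exists (s : {ffun F -> V}) (sigma : {ffun F -> V} -> V -> F -> rat),
    is_SPE E w U s sigma /\ pure_full_profile U sigma.
Proof.
move=> hw hU.
have ex0 : exists p : {ffun F -> V} * {ffun V -> option F}, fppb U p.1 && validA E p.1 p.2.
  have ch f : exists x, x \in U f by apply/set0Pn; exact: hU f.
  pose s0 := [ffun f => xchoose (ch f)].
  have [a0 va0] := validA_exists E s0.
  exists (s0, a0); rewrite /= va0 andbT; apply/forallP => f; rewrite ffunE; exact: xchooseP.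
have [[s a] [/andP[fs va] amin]] := exists_min (fun p => Phi p.2) ex0.
have amin' : forall s2 (a2 : {ffun V -> option F}), fppb U s2 -> validA E s2 a2 -> (Phi a <= Phi a2)%N.
  by move=> s2 a2 h1 h2; apply: (amin (s2, a2)); rewrite /= h1 h2.
have nma : noMove E s a := min_noMove va (fun z2 vz2 => amin' s z2 fs vz2).
have good_ex : forall s', exists z, good E s a s' z.
  move=> s'; case: (s' =P s) => [->|ne].
    by exists a; rewrite /good va nma !eqxx.
  have ne' : (s' == s) = false by apply/eqP.
  case E1: [pick g | s' g != s g] => [g|].
    have [z [/andP[vz nz] zmin]] := exists_min (fun z => ld z g) (eq_exists E s').
    exists z; rewrite /good vz nz ne' E1 /=.
    by apply/forallP => z2; apply/implyP => h2; apply: zmin.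
  have [z /andP[vz nz]] := eq_exists E s'.
  by exists z; rewrite /good vz nz ne' E1.
pose sigma (s' : {ffun F -> V}) : V -> F -> rat :=
  if [pick z | good E s a s' z] is Some z then toC z else (fun _ _ => 0).
have sigmaE : forall s', exists z, good E s a s' z /\ sigma s' = toC z.
  move=> s'; rewrite /sigma; case: pickP => [z gz|none]; first by exists z.
  by have [z gz] := good_ex s'; have := none z; rewrite gz.
exists s, sigma; split; last first.
  move=> s' _ v g; have [z [_ ->]] := sigmaE s'.
  by rewrite /toC; case: (_ == _); [right|left].
split; first by move=> f; exact: (forallP fs f).
split.
  move=> s' _; have [z [gz ->]] := sigmaE s'.
  by move: gz => /and3P[vz nz _]; apply: client_eq_toC.
move=> f x xU.
have [z0 [gz0 e0]] := sigmaE s.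
have z0a : z0 = a by move: gz0; rewrite /good eqxx => /and3P[_ _ /eqP].
rewrite e0 z0a.
have [z1 [gz1 e1]] := sigmaE (upd s f x).
rewrite e1 !toC_load // ltr_nat; apply/negP; rewrite -leqNgt.
case: (upd s f x =P s) => [eqs|ne].
  by move: gz1; rewrite /good eqs eqxx => /and3P[_ _ /eqP ->].
have pk : [pick g | upd s f x g != s g] = Some f.
  case: pickP => [g gne|none].
    by move: gne; rewrite /upd ffunE; case: (g =P f) => [->|]; rewrite ?eqxx.
  exfalso; apply: ne; apply/ffunP => g; by have := none g => /= /negbFE /eqP.
move: gz1; rewrite /good (introF eqP ne) pk => /and3P[_ _ /forallP H].
have [z [zq zle]] := key fs va amin' xU.
by have := H z; rewrite zq /= => le; apply: leq_trans le zle.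
Qed.
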